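(* Let $f\in C^2([1,t_m))$ be the solution of $f''+\frac{4}{3t}f'-\frac{2}{3t^2}f(1+f)-\frac{4(f')^2}{3(1+f)}=0$, $f(1)=\beta>0$, $f'(1)=\beta_0>0$, on its maximal interval of existence $[1,t_m)$, let $0<A<2$ and $g(t)=\exp\big(-A\int_1^t\frac{f(s)(1+f(s))}{s^2f'(s)}ds\big)$. Then $$\lim_{t\to t_m}\frac{1}{g(t)f(t)^{1/2}}=0 .$$
   Context: It is known that $f>0$, $f'>0$ on $[1,t_m)$ and $f(t)\to+\infty$ as $t\to t_m$. *)

(* Defs.v *)
From Stdlib Require Import Reals.
From Coquelicot Require Import Coquelicot.
Open Scope R_scope.

(* Filter "t -> t_m from the left", where t_m is the (possibly infinite)
   right endpoint of the maximal interval of existence [1, t_m). *)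
Definition to_tm (tm : Rbar) : (R -> Prop) -> Prop :=
  match tm with
  | Finite a => at_left a
  | p_infty => Rbar_locally p_infty
  | m_infty => Rbar_locally m_infty
  end.

Definition gfun (A : R) (f f1 : R -> R) (t : R) : R :=
  exp (- A * RInt (fun s => f s * (1 + f s) / (s ^ 2 * f1 s)) 1 t).

(* Main.v *)
Require Import Defs.
From Stdlib Require Import Reals Lra.
From Coquelicot Require Import Coquelicot.
Open Scope R_scope.

Lemma rbar_lt_trans_le (x y : R) (tm : Rbar) : x <= y -> Rbar_lt y tm -> Rbar_lt x tm.
Proof. intros H1 H2. destruct tm as [a| |]; simpl in *; auto; lra. Qed.

Lemma incr_on (F dF : R -> R) (lo : R) (tm : Rbar) :
 (forall x, lo <= x -> Rbar_lt x tm -> is_derive F x (dF x)) ->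
 (forall x, lo <= x -> Rbar_lt x tm -> 0 <= dF x) ->
 forall x y, lo <= x -> x <= y -> Rbar_lt y tm -> F x <= F y.
Proof.
intros Hd Hp x y Hx Hxy Hy.
destruct (Req_dec x y) as [<-|Hne]; [lra|].
destruct (MVT_gen F x y dF) as [c [Hc Heq]].
- rewrite Rmin_left, Rmax_right by lra. intros z Hz.
  apply Hd. lra. apply rbar_lt_trans_le with y; [lra|auto].
- rewrite Rmin_left, Rmax_right by lra. intros z Hz.
  apply continuity_pt_filterlim. apply (ex_derive_continuous (V:=R_NormedModule)).
  eexists. apply Hd. lra. apply rbar_lt_trans_le with y; [lra|auto].
- rewrite Rmin_left, Rmax_right in Hc by lra.
  assert (0 <= dF c).
  { apply Hp. lra. apply rbar_lt_trans_le with y; [lra|auto]. }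
  nra.
Qed.

Lemma ev_to_tm (tm : Rbar) (P : R -> Prop) : Rbar_lt 1 tm -> to_tm tm P ->
  exists t0, 1 < t0 /\ Rbar_lt t0 tm /\ forall t, t0 <= t -> Rbar_lt t tm -> P t.
Proof.
intros Htm H. destruct tm as [a| |]; simpl in *.
- destruct H as [eps He].
  exists (Rmax (a - eps/2) ((1+a)/2)). split; [|split].
  + apply Rlt_le_trans with ((1+a)/2); [lra|apply Rmax_r].
  + apply Rmax_lub_lt; destruct eps; simpl; lra.
  + intros t Ht Hta. apply He; auto.
    assert (a - eps/2 <= t) by (eapply Rle_trans; [apply Rmax_l|eauto]).
    unfold ball; simpl; unfold AbsRing_ball, abs, minus, plus, opp; simpl.
    destruct eps as [e He']; simpl in *. rewrite Rabs_left; lra.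
- destruct H as [M HM]. exists (Rmax (M+1) 2). split; [|split]; auto.
  + apply Rlt_le_trans with 2; [lra|apply Rmax_r].
  + intros t Ht _. apply HM.
    assert (M + 1 <= t) by (eapply Rle_trans; [apply Rmax_l|eauto]). lra.
- contradiction.
Qed.

Lemma to_tm_ev (tm : Rbar) (t0 : R) (P : R -> Prop) : Rbar_lt t0 tm ->
  (forall t, t0 <= t -> Rbar_lt t tm -> P t) -> to_tm tm P.
Proof.
intros Ht H. destruct tm as [a| |]; simpl in *.
- assert (He : 0 < a - t0) by lra. exists (mkposreal _ He).
  intros y Hy Hya. apply H; simpl; auto.
  unfold ball in Hy; simpl in Hy; unfold AbsRing_ball, abs, minus, plus, opp in Hy; simpl in Hy.
  rewrite Rabs_left in Hy; lra.
- exists t0. intros x Hx. apply H; simpl; auto; lra.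
- contradiction.
Qed.

Lemma cont_expr (a b : R -> R) (x : R) : continuous a x -> continuous b x -> b x <> 0 -> x <> 0 ->
  continuous (fun s => a s * (1 + a s) / (s^2 * b s)) x.
Proof.
intros Ha Hb Hbx Hx.
apply continuity_pt_filterlim in Ha. apply continuity_pt_filterlim in Hb.
apply continuity_pt_filterlim.
apply (continuity_pt_div (fun s => a s * (1 + a s)) (fun s => s^2 * b s)).
- apply (continuity_pt_mult a (fun s => 1 + a s)); auto.
  apply (continuity_pt_plus (fun _ => 1) a); auto. apply continuity_pt_const. intros u v; auto.
- apply (continuity_pt_mult (fun s => s^2) b); auto.
  apply derivable_continuous_pt. apply derivable_pt_pow.
- apply Rmult_integral_contrapositive_currified; auto. apply pow_nonzero; auto.
Qed.

Lemma cont_ext (g : R -> R) (tm : Rbar) : filterlim g (at_right 1) (locally (g 1)) ->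
  (forall x, 1 < x -> Rbar_lt x tm -> continuous g x) ->
  forall x, 1 <= x -> Rbar_lt x tm -> continuous (fun s => g (Rmax 1 s)) x.
Proof.
intros Hr Hc x Hx Hxt.
destruct (Req_dec x 1) as [->|Hne].
- unfold continuous. rewrite Rmax_left by lra.
  apply filterlim_locally. intros eps.
  apply filterlim_locally with (eps := eps) in Hr.
  destruct Hr as [d Hd]. exists d. intros y Hy.
  destruct (Rle_dec y 1).
  + rewrite Rmax_left by lra. apply ball_center.
  + rewrite Rmax_right by lra. apply Hd; auto; lra.
- assert (H1 : 1 < x) by lra.
  unfold continuous. rewrite Rmax_right by lra.
  apply filterlim_ext_loc with g.
  + assert (He : 0 < x - 1) by lra. exists (mkposreal _ He). intros y Hy.
    unfold ball in Hy; simpl in Hy; unfold AbsRing_ball, abs, minus, plus, opp in Hy; simpl in Hy.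
    apply Rabs_def2 in Hy. rewrite Rmax_right; auto; lra.
  + apply Hc; auto.
Qed.

Lemma loc_in (t : R) (tm : Rbar) : 1 < t -> Rbar_lt t tm ->
  locally t (fun y => 1 < y /\ Rbar_lt y tm).
Proof.
intros H1 H2.
assert (He : 0 < Rmin (t - 1) (match tm with Finite a => a - t | _ => 1 end)).
{ destruct tm as [a| |]; simpl in *; try contradiction; apply Rmin_pos; lra. }
exists (mkposreal _ He). intros y Hy.
unfold ball in Hy; simpl in Hy; unfold AbsRing_ball, abs, minus, plus, opp in Hy; simpl in Hy.
apply Rabs_def2 in Hy.
assert (Rmin (t - 1) (match tm with Finite a => a - t | _ => 1 end) <= t - 1) by apply Rmin_l.
assert (Rmin (t - 1) (match tm with Finite a => a - t | _ => 1 end) <= (match tm with Finite a => a - t | _ => 1 end)) by apply Rmin_r.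
destruct tm as [a| |]; simpl in *; split; auto; lra.
Qed.

Section H.
Variables (f f1 : R -> R) (tm : Rbar).
Hypothesis (Hd1 : forall t, 1 < t -> Rbar_lt t tm -> ex_derive f t)
  (Hd2 : forall t, 1 < t -> Rbar_lt t tm -> ex_derive f1 t)
  (Hr0 : filterlim f (at_right 1) (locally (f 1)))
  (Hr1 : filterlim f1 (at_right 1) (locally (f1 1)))
  (Hnz : forall t, 1 <= t -> Rbar_lt t tm -> 0 < f1 t).

Let I := fun s => f s * (1 + f s) / (s ^ 2 * f1 s).

Lemma I_ex (b : R) : 1 < b -> Rbar_lt b tm -> ex_RInt I 1 b.
Proof.
intros Hb Hbt.
set (F0 := fun s => f (Rmax 1 s)). set (F1 := fun s => f1 (Rmax 1 s)).
apply ex_RInt_ext with (fun s => F0 s * (1 + F0 s) / (s^2 * F1 s)).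
- rewrite Rmin_left, Rmax_right by lra. intros x Hx. unfold I, F0, F1.
  rewrite Rmax_right by lra. reflexivity.
- apply (ex_RInt_continuous (V:=R_CompleteNormedModule)).
  rewrite Rmin_left, Rmax_right by lra. intros z Hz.
  assert (Hzt : Rbar_lt z tm) by (destruct tm; simpl in *; auto; lra).
  apply cont_expr.
  + apply (cont_ext f tm); auto; try lra. intros; apply (ex_derive_continuous (V:=R_NormedModule)); auto.
  + apply (cont_ext f1 tm); auto; try lra. intros; apply (ex_derive_continuous (V:=R_NormedModule)); auto.
  + unfold F1. rewrite Rmax_right by lra. apply Rgt_not_eq, Hnz; auto; lra.
  + lra.
Qed.

Lemma I_deriv (t : R) : 1 < t -> Rbar_lt t tm -> is_derive (fun t => RInt I 1 t) t (I t).
Proof.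
intros Ht Htt.
apply (is_derive_RInt (V:=R_NormedModule) I (fun t => RInt I 1 t) 1).
- generalize (loc_in t tm Ht Htt). apply filter_imp. intros y [Hy1 Hy2].
  apply (RInt_correct (V:=R_CompleteNormedModule)). apply I_ex; auto.
- apply cont_expr.
  + apply (ex_derive_continuous (V:=R_NormedModule)); auto.
  + apply (ex_derive_continuous (V:=R_NormedModule)); auto.
  + apply Rgt_not_eq, Hnz; auto; lra.
  + lra.
Qed.
End H.

Section E.
Variables (f f1 f2 : R -> R) (tm : Rbar) (K a : R).
Hypothesis (Hd1 : forall t, 1 < t -> Rbar_lt t tm -> is_derive f t (f1 t))
  (Hd2 : forall t, 1 < t -> Rbar_lt t tm -> is_derive f1 t (f2 t))
  (Hode : forall t, 1 <= t -> Rbar_lt t tm ->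
     f2 t + 4 / (3 * t) * f1 t - 2 / (3 * t ^ 2) * f t * (1 + f t)
       - 4 * (f1 t) ^ 2 / (3 * (1 + f t)) = 0)
  (Hpos : forall t, 1 <= t -> Rbar_lt t tm -> 0 < f t /\ 0 < f1 t).

Definition Nf t := t^2 * f1 t ^2 / (1 + f t)^3.
Definition Ef t := (Nf t - K) * exp (a * ln (1 + f t)).
Definition Edf t := (2 * t * f1 t ^2 / (1 + f t)^3 + 2 * t^2 * f1 t * f2 t / (1 + f t)^3
   - 3 * t^2 * f1 t ^ 2 * f1 t / (1 + f t)^4) * exp (a * ln (1 + f t))
   + (Nf t - K) * (exp (a * ln (1 + f t)) * (a * (f1 t / (1 + f t)))).

Lemma Ef_deriv t : 1 < t -> Rbar_lt t tm -> is_derive Ef t (Edf t).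
Proof.
intros H1 H2. destruct (Hpos t) as [Hf Hp]; try lra; auto.
unfold Ef, Edf, Nf.
auto_derive.
- assert (ex_derive f t) by (eexists; apply Hd1; auto).
  assert (ex_derive f1 t) by (eexists; apply Hd2; auto).
  repeat split; auto; try lra.
  apply Rgt_not_eq. assert (0 < 1 + f t) by lra. apply Rlt_gt. repeat apply Rmult_lt_0_compat; lra.
- replace (Derive (fun x => f x) t) with (f1 t) by (symmetry; apply is_derive_unique; apply Hd1; auto).
  replace (Derive (fun x => f1 x) t) with (f2 t) by (symmetry; apply is_derive_unique; apply Hd2; auto).
  field. lra.
Qed.
Lemma Edf_nonneg t : 1 < t -> Rbar_lt t tm -> 1 < 3 * a ->
  0 <= 4 * f t - 3 * a * K * (1 + f t) - / (3 * a - 1) -> 0 <= Edf t.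
Proof.
intros H1 H2 Ha Hc. destruct (Hpos t) as [Hf Hp]; try lra; auto.
assert (Hf2 : f2 t = - 4 / (3 * t) * f1 t + 2 / (3 * t ^ 2) * f t * (1 + f t)
       + 4 * (f1 t) ^ 2 / (3 * (1 + f t))).
{ generalize (Hode t ltac:(lra) H2). lra. }
set (e := exp (a * ln (1 + f t))).
assert (He : 0 < e) by apply exp_pos.
set (u := 1 + f t). set (p := f1 t). set (X := t * p / u).
assert (Hu : 0 < u) by (unfold u; lra).
assert (Heq : Edf t = e * p / (3 * u^2) * (4 * f t - 2 * X + (3*a-1) * X^2 - 3*a*K*u)).
{ unfold Edf, Nf. fold e. fold u. fold p. rewrite Hf2. fold u p. unfold X, u. field. lra. }
rewrite Heq. apply Rmult_le_pos.
- apply Rmult_le_pos. apply Rmult_le_pos; [lra|unfold p; lra]. apply Rlt_le, Rinv_0_lt_compat. apply Rmult_lt_0_compat; [lra|apply pow_lt; lra].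
- assert (0 <= (3*a-1) * (X - / (3*a-1))^2) by (apply Rmult_le_pos; [lra|apply pow2_ge_0]).
  assert (Hi : (3*a-1) * / (3*a-1) = 1) by (field; lra).
  assert ((3*a-1) * (X - / (3*a-1))^2 = (3*a-1) * X^2 - 2 * X + / (3*a-1)).
  { replace ((3*a-1) * (X - / (3*a-1))^2) with ((3*a-1)*X^2 - 2*X*((3*a-1) * / (3*a-1)) + (3*a-1) * / (3*a-1) * / (3*a-1)) by ring.
    rewrite Hi. ring. }
  unfold u in *. lra.
Qed.
End E.

Lemma exp_gt (x : R) : x < exp x.
Proof.
destruct (Req_dec x 0) as [->|H]. rewrite exp_0; lra.
generalize (exp_ineq1 x H); lra.
Qed.

Lemma blow_ev (f : R -> R) (tm : Rbar) (M : R) :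
  filterlim f (to_tm tm) (Rbar_locally p_infty) -> to_tm tm (fun t => M < f t).
Proof. intros H. apply H. exists M. auto. Qed.

#[local] Instance to_tm_F (tm : Rbar) : Filter (to_tm tm).
Proof. destruct tm as [a| |]; simpl; typeclasses eauto. Qed.

Theorem corollarys
  (beta beta0 A : R) (tm : Rbar) (f f1 f2 : R -> R)
  (Hbeta : 0 < beta) (Hbeta0 : 0 < beta0)
  (HA0 : 0 < A) (HA2 : A < 2)
  (Htm : Rbar_lt 1 tm)
  (Hd1 : forall t, 1 < t -> Rbar_lt t tm -> is_derive f t (f1 t))
  (Hd2 : forall t, 1 < t -> Rbar_lt t tm -> is_derive f1 t (f2 t))
  (Hc2 : forall t, 1 < t -> Rbar_lt t tm -> continuous f2 t)
  (Hr0 : filterlim f (at_right 1) (locally (f 1)))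
  (Hr1 : filterlim f1 (at_right 1) (locally (f1 1)))
  (Hr2 : filterlim f2 (at_right 1) (locally (f2 1)))
  (Hode : forall t, 1 <= t -> Rbar_lt t tm ->
     f2 t + 4 / (3 * t) * f1 t - 2 / (3 * t ^ 2) * f t * (1 + f t)
       - 4 * (f1 t) ^ 2 / (3 * (1 + f t)) = 0)
  (Hi0 : f 1 = beta) (Hi1 : f1 1 = beta0)
  (Hpos : forall t, 1 <= t -> Rbar_lt t tm -> 0 < f t /\ 0 < f1 t)
  (Hblow : filterlim f (to_tm tm) (Rbar_locally p_infty)) :
  filterlim (fun t => 1 / (gfun A f f1 t * sqrt (f t))) (to_tm tm) (locally 0).
Proof.
set (I := fun s => f s * (1 + f s) / (s ^ 2 * f1 s)).
set (K := 3 + A / 2). set (c := 2 + A). set (a := (14 + A) / (36 + 6 * A)).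
assert (Ha1 : 1 < 3 * a) by (unfold a; apply Rmult_lt_reg_r with (36 + 6*A); [lra|];
  field_simplify; [lra|lra]).
assert (HaK : 3 * a * K = (14 + A) / 4) by (unfold a, K; field; lra).
assert (Hainv : / (3 * a - 1) = (12 + 2 * A) / (2 - A)) by (unfold a; field; lra).
assert (Ha0 : 0 < a) by lra.
set (M1 := ((14 + A) / 4 + (12 + 2 * A) / (2 - A)) * 4 / (2 - A)).
destruct (ev_to_tm tm _ Htm (blow_ev f tm M1 Hblow)) as [t0 [Ht01 [Ht0tm Ht0]]].
assert (Hcond : forall t, t0 <= t -> Rbar_lt t tm ->
   0 <= 4 * f t - 3 * a * K * (1 + f t) - / (3 * a - 1)).
{ intros t Ht Htt. generalize (Ht0 t Ht Htt). rewrite HaK, Hainv. unfold M1. intros H.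
  assert (H' : ((14 + A) / 4 + (12 + 2 * A) / (2 - A)) < f t * (2 - A) / 4).
  { apply Rmult_lt_reg_r with (4 / (2 - A)). apply Rdiv_lt_0_compat; lra.
    replace (f t * (2 - A) / 4 * (4 / (2 - A))) with (f t) by (field; lra). lra. }
  lra. }
assert (HE : forall t, t0 <= t -> Rbar_lt t tm -> Ef f f1 K a t0 <= Ef f f1 K a t).
{ intros t Ht Htt. apply (incr_on _ (Edf f f1 f2 K a) t0 tm); auto; try lra.
  - intros x Hx Hxt. apply Ef_deriv with tm; auto; lra.
  - intros x Hx Hxt. apply Edf_nonneg with tm; auto; lra. }
set (E0 := Ef f f1 K a t0).
set (Y := Rabs E0 / (a * (K - c)) + 1).
assert (HKc : 0 < K - c) by (unfold K, c; lra).
destruct (ev_to_tm tm _ Htm (blow_ev f tm (exp Y) Hblow)) as [t1' [Ht11 [Ht1tm Ht1]]].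
set (t1 := Rmax t0 t1').
assert (Ht1tm' : Rbar_lt t1 tm) by (unfold t1; apply Rmax_case; auto).
assert (HN : forall t, t1 <= t -> Rbar_lt t tm -> c <= Nf f f1 t).
{ intros t Ht Htt.
  assert (Ha : t0 <= t) by (eapply Rle_trans; [apply Rmax_l|apply Ht]).
  assert (Hb : t1' <= t) by (eapply Rle_trans; [apply Rmax_r|apply Ht]).
  destruct (Hpos t) as [Hf Hp]; try lra; auto.
  generalize (HE t Ha Htt). fold E0. unfold Ef. intros HEt.
  set (L := exp (a * ln (1 + f t))) in *.
  assert (HL : a * Y < L).
  { apply Rlt_trans with (a * ln (1 + f t)); [|apply exp_gt].
    apply Rmult_lt_compat_l; auto.
    rewrite <- (ln_exp Y). apply ln_increasing. apply exp_pos.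
    generalize (Ht1 t Hb Htt). lra. }
  assert (HaY : a * Y = Rabs E0 / (K - c) + a) by (unfold Y; field; lra).
  assert (Hab : Rabs E0 < (K - c) * L).
  { assert (Rabs E0 / (K - c) < L) by lra.
    apply Rmult_lt_reg_r with (/ (K - c)). apply Rinv_0_lt_compat; lra.
    replace ((K - c) * L * / (K - c)) with L by (field; lra). lra. }
  assert (HL0 : 0 < L) by apply exp_pos.
  assert (- Rabs E0 <= E0) by (generalize (Rabs_pos E0); apply Rabs_maj2 || (generalize (Rle_abs (-E0)); rewrite Rabs_Ropp; lra)).
  destruct (Rle_dec c (Nf f f1 t)) as [Hok|Hno]; auto.
  exfalso. assert (Nf f f1 t - K < -(K - c)) by lra.
  assert ((Nf f f1 t - K) * L < - (K - c) * L) by (apply Rmult_lt_compat_r; lra).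
  lra. }
set (w := A / c).
assert (Hw : 0 < w < / 2) by (unfold w, c; split; [apply Rdiv_lt_0_compat; lra|];
  apply Rmult_lt_reg_r with (2 + A); [lra|]; field_simplify; lra).
set (D := fun t => w * ln (f t) - A * RInt I 1 t).
assert (HD : forall t, t1 <= t -> Rbar_lt t tm -> D t1 <= D t).
{ intros t Ht Htt.
  apply (incr_on D (fun t => w * (f1 t / f t) - A * I t) t1 tm); auto; try lra.
  - intros x Hx Hxt.
    assert (Hx1 : 1 < x) by (unfold t1 in Hx; generalize (Rmax_l t0 t1'); lra).
    destruct (Hpos x) as [Hf Hp]; try lra; auto.
    apply (is_derive_minus (K:=R_AbsRing) (V:=R_NormedModule) (fun t => w * ln (f t)) (fun t => A * RInt I 1 t)).
    + auto_derive.
      * split; [eexists; apply Hd1; auto|]. split; [lra|auto].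
      * replace (Derive (fun x => f x) x) with (f1 x) by (symmetry; apply is_derive_unique; apply Hd1; auto).
        field. lra.
    + apply is_derive_scal.
      apply (I_deriv f f1 tm); auto.
      * intros; eexists; apply Hd1; auto.
      * intros; eexists; apply Hd2; auto.
      * intros; apply Hpos; auto.
  - intros x Hx Hxt.
    assert (Hx1 : 1 < x) by (unfold t1 in Hx; generalize (Rmax_l t0 t1'); lra).
    destruct (Hpos x) as [Hf Hp]; try lra; auto.
    generalize (HN x Hx Hxt). unfold Nf, I. intros HNx.
    set (u := 1 + f x) in *.
    assert (Hu : 0 < u) by (unfold u; lra).
    assert (H3 : c * u^3 <= x^2 * f1 x ^2).
    { apply Rmult_le_reg_r with (/ u^3). apply Rinv_0_lt_compat, pow_lt; lra.
      replace (c * u^3 * / u^3) with c by (field; lra). unfold Rdiv in HNx. lra. }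
    assert (H4 : f x ^ 2 * u <= u ^ 3) by (unfold u; nra).
    assert (H5 : A * (f x ^2 * u) <= w * (x^2 * f1 x ^2)).
    { apply Rle_trans with (A * u^3). apply Rmult_le_compat_l; lra.
      replace (A * u^3) with (w * (c * u^3)) by (unfold w; field; unfold c; lra).
      apply Rmult_le_compat_l; lra. }
    replace (w * (f1 x / f x) - A * (f x * u / (x ^ 2 * f1 x)))
      with ((w * (x^2 * f1 x ^2) - A * (f x ^2 * u)) / (f x * x^2 * f1 x)) by (field; repeat split; lra).
    apply Rmult_le_pos; [lra|]. apply Rlt_le, Rinv_0_lt_compat.
    apply Rmult_lt_0_compat; [apply Rmult_lt_0_compat|]; try lra. apply pow_lt; lra. }
apply (filterlim_locally (F:=to_tm tm)). intros eps.
set (Z := (- D t1 - ln eps) / (/ 2 - w)).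
destruct (ev_to_tm tm _ Htm (blow_ev f tm (exp Z) Hblow)) as [t2' [Ht21 [Ht2tm Ht2]]].
apply to_tm_ev with (Rmax t1 t2'). apply Rmax_case; auto.
intros t Ht Htt.
assert (Ha : t1 <= t) by (eapply Rle_trans; [apply Rmax_l|apply Ht]).
assert (Hb : t2' <= t) by (eapply Rle_trans; [apply Rmax_r|apply Ht]).
assert (Ht1x : 1 < t) by (generalize (Rmax_l t0 t1'); fold t1; lra).
destruct (Hpos t) as [Hf Hp]; try lra; auto.
assert (Hsq : sqrt (f t) = exp (ln (f t) / 2)).
{ rewrite <- (exp_ln (f t)) at 1 by lra.
  replace (ln (f t)) with (ln (f t) / 2 + ln (f t) / 2) at 1 by field.
  rewrite exp_plus. apply sqrt_square. apply Rlt_le, exp_pos. }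
assert (Hv : 1 / (gfun A f f1 t * sqrt (f t)) = exp (- (D t) - (/2 - w) * ln (f t))).
{ unfold gfun, D. rewrite Hsq. fold I. rewrite <- exp_plus.
  replace (1 / exp (- A * RInt I 1 t + ln (f t) / 2)) with (exp (- (- A * RInt I 1 t + ln (f t) / 2))).
  - f_equal. field.
  - rewrite exp_Ropp. field. apply Rgt_not_eq, exp_pos. }
rewrite Hv.
unfold ball; simpl; unfold AbsRing_ball, abs, minus, plus, opp; simpl.
rewrite Ropp_0, Rplus_0_r, Rabs_pos_eq by (apply Rlt_le, exp_pos).
rewrite <- (exp_ln eps) by (destruct eps; simpl; lra).
apply exp_increasing.
generalize (HD t Ha Htt). intros HDt.
assert (HZ : Z < ln (f t)).
{ rewrite <- (ln_exp Z). apply ln_increasing. apply exp_pos. apply Ht2; auto. }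
assert (HZ' : (/2 - w) * Z = - D t1 - ln eps) by (unfold Z; field; lra).
assert ((/2 - w) * Z < (/2 - w) * ln (f t)) by (apply Rmult_lt_compat_l; lra).
lra.
Qed.
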